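(* Let $K$ be a commutative ring with unit and let $\mathfrak X$ be a class of representations in $Rep\text{-}K$ of the form $\mathfrak X=T^*=\{(V,G)\mid \text{every formula of } T \text{ holds in } (V,G)\}$, where $T$ is a set of action-type formulas. Then $\mathfrak X$ is saturated, right-hereditary and right-local.
   Context: $Rep\text{-}K$ is the variety of two-sorted algebras (representations) $(V,G)$, where $V$ is a $K$-module, $G$ a group, and $\circ: V\times G\to V$ an action such that $a\mapsto a\circ g$ is $K$-linear, $(a\circ g_1)\circ g_2=a\circ g_1g_2$, and $a\circ 1=a$. Morphisms are pairs $(\alpha,\beta)$ with $\alpha$ a $K$-module homomorphism, $\beta$ a group homomorphism, and $(a\circ g)^\alpha=a^\alpha\circ g^\beta$. For countable sets $X,Y$, let $F=F(Y)$ be the free group on $Y$, $KF$ its group algebra, and $W=W(X,Y)=(XKF,F)$ the free representation, where $XKF$ is the free right $KF$-module on $X$ with action $w\circ f=wf$. Every pair of maps $X\to V$, $Y\to G$ extends uniquely to a homomorphism $\mu=(\alpha,\beta):W\to(V,G)$. Action-type formulas are built from atomic formulas $w\equiv 0$ ($w\in XKF$) using $\vee,\wedge,\neg$ and quantifiers $\exists x$ ($x\in X$) only (no group equalities $f\equiv1$, no quantifiers over $Y$). The value $Val_{(V,G)}(u)\subseteq Hom(W,(V,G))$ is defined by: $\mu=(\alpha,\beta)\in Val(w\equiv0)$ iff $w^\alpha=0$ in $V$ (here $w^\alpha=\sum x_i^\alpha\circ u_i^\beta$ for $w=\sum x_iu_i$); $\vee,\wedge,\neg$ act as union, intersection, complement;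 $\mu=(\alpha,\beta)\in Val(\exists x\,u)$ iff there is $\nu=(\alpha',\beta)\in Val(u)$ with $\alpha'(x')=\alpha(x')$ for all $x'\in X$, $x'\neq x$. A formula $u$ holds in $(V,G)$ if $Val_{(V,G)}(u)=Hom(W,(V,G))$. For a representation $(V,G)$, the corresponding faithful representation is $(V,\overline G)$ with $\overline G=G/N$, $N$ the kernel of the action of $G$ on $V$. A class $\mathfrak X$ is saturated if $(V,G)\in\mathfrak X \iff (V,\overline G)\in\mathfrak X$; right-hereditary if $(V,G)\in\mathfrak X$ implies $(V,H)\in\mathfrak X$ for every subgroup $H\le G$; right-local if $(V,G)\in\mathfrak X$ whenever $(V,H)\in\mathfrak X$ for all finitely generated subgroups $H\le G$. *)

(* Defs.v *)
From HB Require Import structures.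
From mathcomp Require Import all_boot all_algebra.
From Stdlib Require Import ClassicalEpsilon FunctionalExtensionality
  PropExtensionality ProofIrrelevance.
Set Implicit Arguments. Unset Strict Implicit. Unset Printing Implicit Defensive.
Import GRing.Theory.
Local Open Scope ring_scope.

Record grp := Grp {
  gcar :> Type;
  gmul : gcar -> gcar -> gcar;
  ginv : gcar -> gcar;
  gone : gcar;
  gmulA : forall x y z, gmul x (gmul y z) = gmul (gmul x y) z;
  gmul1 : forall x, gmul gone x = x;
  gmulV : forall x, gmul (ginv x) x = gone }.

Arguments gone {g}.

Lemma gmulVr (G : grp) (x : G) : gmul x (ginv x) = gone.
Proof.
have H := gmulV (ginv x).
rewrite -[gmul x (ginv x)]gmul1 -{1}H -gmulA (gmulA (ginv x) x) gmulV gmul1.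
exact: H.
Qed.

Lemma sig_eqP (A : Type) (P : A -> Prop) (x y : sig P) :
  proj1_sig x = proj1_sig y -> x = y.
Proof.
case: x y => [x px] [y py] /= exy; subst y; f_equal; apply: proof_irrelevance.
Qed.

Record rep (K : pzRingType) := Rep {
  rV : lmodType K;
  rG : grp;
  ract : rV -> rG -> rV;
  ract_lin : forall (g : rG) (k : K) (u v : rV),
      ract (k *: u + v) g = k *: ract u g + ract v g;
  ract_mul : forall (u : rV) (g1 g2 : rG),
      ract (ract u g1) g2 = ract u (gmul g1 g2);
  ract_one : forall u : rV, ract u gone = u }.

Section Constructions.
Variable K : pzRingType.

Record subgroup (G : grp) := Subgroup {
  sgpred :> G -> Prop;
  sg1 : sgpred gone;
  sgM : forall x y, sgpred x -> sgpred y -> sgpred (gmul x y);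
  sgV : forall x, sgpred x -> sgpred (ginv x) }.

Definition sub_grp (G : grp) (S : subgroup G) : grp.
Proof.
refine (@Grp {g : G | S g}
  (fun x y => exist _ (gmul (proj1_sig x) (proj1_sig y))
                (sgM (proj2_sig x) (proj2_sig y)))
  (fun x => exist _ (ginv (proj1_sig x)) (sgV (proj2_sig x)))
  (exist _ gone (sg1 S)) _ _ _).
- by move=> x y z; apply: sig_eqP; rewrite /= gmulA.
- by move=> x; apply: sig_eqP; rewrite /= gmul1.
- by move=> x; apply: sig_eqP; rewrite /= gmulV.
Defined.

Definition restrict (R : rep K) (S : subgroup (rG R)) : rep K.
Proof.
refine (@Rep K (rV R) (sub_grp S) (fun u h => ract u (proj1_sig h)) _ _ _).
- by move=> g k u v; rewrite ract_lin.
- by move=> u g1 g2; rewrite ract_mul.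
- by move=> u; rewrite /= ract_one.
Defined.

Inductive gen (G : grp) (s : seq G) : G -> Prop :=
  | gen_in x : List.In x s -> gen s x
  | gen_one : gen s gone
  | gen_mul x y : gen s x -> gen s y -> gen s (gmul x y)
  | gen_inv x : gen s x -> gen s (ginv x).

Definition fin_gen (G : grp) (S : subgroup G) : Prop :=
  exists s : seq G, forall g, S g <-> gen s g.

Definition kerN (R : rep K) (g : rG R) : Prop := forall u : rV R, ract u g = u.

Definition coset (R : rep K) (g : rG R) : rG R -> Prop :=
  fun h => kerN (gmul (ginv g) h).

Definition qcar (R : rep K) := {P : rG R -> Prop | exists g, P = coset g}.

Definition qrep (R : rep K) (P : qcar R) : rG R :=
  proj1_sig (constructive_indefinite_description _ (proj2_sig P)).

Lemma qrepP (R : rep K) (P : qcar R) : proj1_sig P = coset (qrep P).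
Proof. exact: (proj2_sig (constructive_indefinite_description _ (proj2_sig P))). Qed.

Definition qmk (R : rep K) (g : rG R) : qcar R :=
  exist _ (coset g) (ex_intro _ g erefl).

Lemma cosetP (R : rep K) (g h : rG R) :
  coset g h <-> forall u, ract u h = ract u g.
Proof.
split=> H u.
- by rewrite -{1}(gmul1 h) -(gmulVr g) -gmulA -ract_mul H.
- by rewrite -ract_mul H ract_mul gmulV ract_one.
Qed.

Lemma qmk_eq (R : rep K) (g h : rG R) :
  (forall u, ract u g = ract u h) -> qmk g = qmk h.
Proof.
move=> E; apply: sig_eqP => /=; apply: functional_extensionality => x.
apply: propositional_extensionality; rewrite !cosetP; split=> H u.
- by rewrite H E.
- by rewrite H E.
Qed.

Lemma qrep_act (R : rep K) (g : rG R) u : ract u (qrep (qmk g)) = ract u g.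
Proof.
have: coset (qrep (qmk g)) g by rewrite -qrepP /= /coset /kerN => v;
  rewrite gmulV ract_one.
by move/cosetP=> ->.
Qed.

Lemma qmk_rep (R : rep K) (P : qcar R) : P = qmk (qrep P).
Proof. by apply: sig_eqP; rewrite qrepP. Qed.

Definition quot_grp (R : rep K) : grp.
Proof.
refine (@Grp (qcar R)
  (fun P Q => qmk (gmul (qrep P) (qrep Q)))
  (fun P => qmk (ginv (qrep P)))
  (qmk gone) _ _ _).
- move=> P Q S; apply: qmk_eq => u.
  by rewrite -!ract_mul !qrep_act !ract_mul gmulA.
- move=> P; rewrite [in RHS](qmk_rep P); apply: qmk_eq => u.
  by rewrite -ract_mul qrep_act ract_one.
- move=> P; apply: qmk_eq => u.
  by rewrite -ract_mul qrep_act ract_mul gmulV.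
Defined.

Definition faithful_rep (R : rep K) : rep K.
Proof.
refine (@Rep K (rV R) (quot_grp R) (fun u P => ract u (qrep P)) _ _ _).
- by move=> g k u v; rewrite ract_lin.
- by move=> u P Q /=; rewrite qrep_act ract_mul.
- by move=> u /=; rewrite qrep_act ract_one.
Defined.

Definition saturated (X : rep K -> Prop) : Prop :=
  forall R : rep K, X R <-> X (faithful_rep R).

Definition right_hereditary (X : rep K -> Prop) : Prop :=
  forall R : rep K, X R -> forall S : subgroup (rG R), X (restrict S).

Definition right_local (X : rep K -> Prop) : Prop :=
  forall R : rep K,
    (forall S : subgroup (rG R), fin_gen S -> X (restrict S)) -> X R.

(* Free representation W(X,Y), X = Y = nat.                            *)
(* An element of F(Y) is presented by a word [(y1,e1);...;(yn,en)]      *)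
(* meaning y1^(+-1) ... yn^(+-1) (e = true means inverse); an element   *)
(* of XKF is presented by a finite formal sum [(k1,x1,f1);...]          *)
(* meaning sum_i x_i (k_i f_i).                                          *)
Definition fword := seq (nat * bool).
Definition xkf := seq (K * nat * fword).

Fixpoint weval (G : grp) (b : nat -> G) (w : fword) : G :=
  match w with
  | [::] => gone
  | (y, e) :: w' => gmul (if e then ginv (b y) else b y) (weval b w')
  end.

(* w^alpha for the homomorphism mu = (alpha,beta) determined by a : X -> V, b : Y -> G *)
Fixpoint xeval (R : rep K) (a : nat -> rV R) (b : nat -> rG R) (w : xkf) : rV R :=
  match w with
  | [::] => 0
  | (k, x, f) :: w' => k *: ract (a x) (weval b f) + xeval a b w'
  end.

Inductive formula :=
  | FZero of xkf
  | FOr of formula & formula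
  | FAnd of formula & formula
  | FNot of formula
  | FEx of nat & formula.

Fixpoint sat (R : rep K) (a : nat -> rV R) (b : nat -> rG R) (u : formula) : Prop :=
  match u with
  | FZero w => xeval a b w = 0
  | FOr u1 u2 => sat a b u1 \/ sat a b u2
  | FAnd u1 u2 => sat a b u1 /\ sat a b u2
  | FNot u1 => ~ sat a b u1
  | FEx x u1 => exists v : rV R, sat (fun x' => if x' == x then v else a x') b u1
  end.

Definition holds (R : rep K) (u : formula) : Prop :=
  forall (a : nat -> rV R) (b : nat -> rG R), sat a b u.

Definition models (T : formula -> Prop) : rep K -> Prop :=
  fun R => forall u, T u -> holds R u.

End Constructions.

(* Main.v *)
Require Import Defs.
From mathcomp Require Import all_boot all_algebra.
Set Implicit Arguments. Unset Strict Implicit. Unset Printing Implicit Defensive.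
Import GRing.Theory.
Local Open Scope ring_scope.

Section Proofs.
Variable K : comPzRingType.

Fixpoint wb (w : fword) : nat :=
  match w with [::] => 0%N | (y, e) :: w' => maxn y.+1 (wb w') end.
Fixpoint xb (w : xkf K) : nat :=
  match w with [::] => 0%N | (k, x, f) :: w' => maxn (wb f) (xb w') end.
Fixpoint fb (f : formula K) : nat :=
  match f with
  | FZero w => xb w
  | FOr a b => maxn (fb a) (fb b)
  | FAnd a b => maxn (fb a) (fb b)
  | FNot a => fb a
  | FEx _ a => fb a
  end.

Lemma xeval_ext (R : rep K) a (b1 b2 : nat -> rG R) w :
  (forall f u, (wb f <= xb w)%N -> ract u (weval b1 f) = ract u (weval b2 f)) ->
  xeval a b1 w = xeval a b2 w.
Proof.
elim: w => [|[[k x] f] w IH] H //=.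
rewrite H ?leq_maxl // IH // => f' u Hf; apply: H.
exact: (leq_trans Hf (leq_maxr _ _)).
Qed.

Lemma sat_gen (R : rep K) (b1 b2 : nat -> rG R) (f : formula K) :
  (forall w u, (wb w <= fb f)%N -> ract u (weval b1 w) = ract u (weval b2 w)) ->
  forall a, sat a b1 f <-> sat a b2 f.
Proof.
elim: f => [w|f1 IH1 f2 IH2|f1 IH1 f2 IH2|f1 IH1|x f1 IH1] /= H a.
- by rewrite (xeval_ext _ H).
- have H1 : forall w u, (wb w <= fb f1)%N -> ract u (weval b1 w) = ract u (weval b2 w).
    by move=> w u Hw; apply: H; exact: (leq_trans Hw (leq_maxl _ _)).
  have H2 : forall w u, (wb w <= fb f2)%N -> ract u (weval b1 w) = ract u (weval b2 w).
    by move=> w u Hw; apply: H; exact: (leq_trans Hw (leq_maxr _ _)).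
  by rewrite (IH1 H1) (IH2 H2).
- have H1 : forall w u, (wb w <= fb f1)%N -> ract u (weval b1 w) = ract u (weval b2 w).
    by move=> w u Hw; apply: H; exact: (leq_trans Hw (leq_maxl _ _)).
  have H2 : forall w u, (wb w <= fb f2)%N -> ract u (weval b1 w) = ract u (weval b2 w).
    by move=> w u Hw; apply: H; exact: (leq_trans Hw (leq_maxr _ _)).
  by rewrite (IH1 H1) (IH2 H2).
- by rewrite (IH1 H).
- by split=> [[v Hv]|[v Hv]]; exists v; move: Hv; rewrite (IH1 H).
Qed.

Lemma act_inv_eq (R : rep K) (g h : rG R) :
  (forall u, ract u g = ract u h) -> forall u, ract u (ginv g) = ract u (ginv h).
Proof.
move=> E v.
have -> : ract v (ginv g) = ract (ract (ract v (ginv h)) h) (ginv g).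
  by rewrite [ract (ract v _) h]ract_mul gmulV ract_one.
by rewrite -E [ract (ract _ g) _]ract_mul gmulVr ract_one.
Qed.

Lemma weval_act (R : rep K) (b1 b2 : nat -> rG R) :
  (forall y u, ract u (b1 y) = ract u (b2 y)) ->
  forall w u, ract u (weval b1 w) = ract u (weval b2 w).
Proof.
move=> E; elim=> [|[y e] w IH] u //=.
rewrite -!ract_mul IH; case: e => /=.
- by rewrite (act_inv_eq (E y)).
- by rewrite E.
Qed.

Lemma weval_faith (R : rep K) (b : nat -> rG (faithful_rep R)) w u :
  ract u (qrep (weval b w)) = ract u (weval (fun y => qrep (b y)) w).
Proof.
elim: w u => [|[y e] w IH] u /=.
- by rewrite qrep_act.
- rewrite qrep_act -!ract_mul IH; case: e => //=.
  by rewrite qrep_act.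
Qed.

Lemma xeval_faith (R : rep K) a (b : nat -> rG (faithful_rep R)) w :
  @xeval _ (faithful_rep R) a b w = @xeval _ R a (fun y => qrep (b y)) w.
Proof.
elim: w => [|[[k x] f] w IH] //=.
by rewrite IH weval_faith.
Qed.

Lemma sat_faith (R : rep K) (b : nat -> rG (faithful_rep R)) f :
  forall a, @sat _ (faithful_rep R) a b f <-> @sat _ R a (fun y => qrep (b y)) f.
Proof.
elim: f => [w|f1 IH1 f2 IH2|f1 IH1 f2 IH2|f1 IH1|x f1 IH1] a /=.
- by rewrite xeval_faith.
- by rewrite IH1 IH2.
- by rewrite IH1 IH2.
- by rewrite IH1.
- by split=> [[v Hv]|[v Hv]]; exists v; move: Hv; rewrite IH1.
Qed.

Lemma weval_restr (R : rep K) (S : subgroup (rG R)) (b : nat -> rG (restrict S)) w :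
  proj1_sig (weval b w) = weval (fun y => proj1_sig (b y)) w.
Proof.
elim: w => [|[y e] w IH] //=.
by rewrite IH; case: e.
Qed.

Lemma xeval_restr (R : rep K) (S : subgroup (rG R)) a (b : nat -> rG (restrict S)) w :
  @xeval _ (restrict S) a b w = @xeval _ R a (fun y => proj1_sig (b y)) w.
Proof.
elim: w => [|[[k x] f] w IH] //=.
by rewrite IH weval_restr.
Qed.

Lemma sat_restr (R : rep K) (S : subgroup (rG R)) (b : nat -> rG (restrict S)) f :
  forall a, @sat _ (restrict S) a b f <-> @sat _ R a (fun y => proj1_sig (b y)) f.
Proof.
elim: f => [w|f1 IH1 f2 IH2|f1 IH1 f2 IH2|f1 IH1|x f1 IH1] a /=.
- by rewrite xeval_restr.
- by rewrite IH1 IH2.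
- by rewrite IH1 IH2.
- by rewrite IH1.
- by split=> [[v Hv]|[v Hv]]; exists v; move: Hv; rewrite IH1.
Qed.

Lemma In_map_iota (A : Type) (b : nat -> A) n m y :
  (m <= y < m + n)%N -> List.In (b y) (map b (iota m n)).
Proof.
elim: n m => [|n IH] m /=; first by rewrite addn0; case/andP=> H1 H2; 
  move: (leq_trans H2 H1); rewrite ltnn.
case/andP=> H1 H2; case: (eqVneq y m) => [->|ne]; first by left.
right; apply: IH; rewrite addSnnS H2 andbT ltn_neqAle H1 eq_sym ne //.
Qed.

Lemma weval_agree (G : grp) (b1 b2 : nat -> G) w :
  (forall y, (y < wb w)%N -> b1 y = b2 y) -> weval b1 w = weval b2 w.
Proof.
elim: w => [|[y e] w IH] //= H.
rewrite H ?IH //; last by rewrite leq_max ltnSn.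
by move=> z Hz; apply: H; rewrite leq_max Hz orbT.
Qed.

End Proofs.

Theorem theorem2p1 (K : comPzRingType) (T : formula K -> Prop) :
  saturated (models T) /\ right_hereditary (models T) /\ right_local (models T).
Proof.
split; [|split].
- move=> R; split.
  + move=> HR u Tu a b; apply/sat_faith; exact: HR.
  + move=> HF u Tu a b.
    have := HF u Tu a (fun y => qmk (b y)); move/sat_faith.
    apply: (proj1 (sat_gen (b1 := fun y => qrep (qmk (b y))) (b2 := b) _ a)).
    move=> w v _; apply: weval_act => y x; exact: qrep_act.
- move=> R HR S u Tu a b; apply/sat_restr; exact: HR.
- move=> R H u Tu a b.
  pose N := fb u.
  pose s := map b (iota 0 N).
  pose S := @Subgroup _ (gen s) (@gen_one _ s) (@gen_mul _ s) (@gen_inv _ s).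
  have HS := H S (ex_intro (fun s0 => forall g, S g <-> gen s0 g) s (fun g => iff_refl _)) u Tu a.
  have genP : forall y, gen s (if (y < N)%N then b y else gone).
    move=> y; case: ifP => [p|_]; last exact: gen_one.
    by apply: gen_in; apply: In_map_iota.
  pose b' (y : nat) : rG (restrict S) := exist _ _ (genP y).
  have := HS b'; move/sat_restr.
  apply: (proj1 (sat_gen (b1 := fun y => proj1_sig (b' y)) (b2 := b) _ a)).
  move=> w v Hw; congr (ract v _); apply: weval_agree => y Hy.
  by rewrite /b' /= (leq_trans Hy Hw).
Qed.
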